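(* Let $f=a_0+a_1 z+\cdots+a_mz^m\in \mathbb{Z}[z]$ be primitive (the greatest common divisor of its coefficients is $1$). Suppose there exists a positive real number $\alpha$ such that \[ |a_m| \alpha^m>|a_0|+|a_1|\alpha+\cdots+|a_{m-1}|\alpha^{m-1}. \] Further, suppose there exist natural numbers $n$, $d$, $k$, $\ell \leq m$, and a prime $p$ with $p\nmid d$ such that $n\geq \alpha+d$, $f(n)=\pm p^k d$, $\gcd(k,\ell)=1$, $p^k$ divides $\frac{f^{(i)}(n)}{i!}$ for each $i=0, 1, \ldots,\ell-1$, and, in case $k>1$, also $p\nmid \frac{f^{(\ell)}(n)}{\ell!}$. Then $f$ is irreducible in $\mathbb{Z}[z]$.
   Context: $f^{(i)}$ denotes the $i$-th derivative of $f$ with respect to $z$. Natural numbers are positive integers. *)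

(* Defs.v *)
From HB Require Import structures.
From mathcomp Require Import all_boot all_order all_algebra.
From mathcomp Require Import all_reals.
Set Implicit Arguments. Unset Strict Implicit. Unset Printing Implicit Defensive.
Import Order.TTheory GRing.Theory Num.Theory.
Local Open Scope ring_scope.

Definition primitive_intpoly (f : {poly int}) : Prop :=
  (\big[gcdn/0%N]_(i < size f) absz (f`_i)%R)%N = 1%N.

Definition irreducible_in_Zz (f : {poly int}) : Prop :=
  f != 0 /\ f \isn't a GRing.unit /\
  forall g h : {poly int}, f = g * h -> g \is a GRing.unit \/ h \is a GRing.unit.

(* Main.v *)
Require Import Defs.
From HB Require Import structures.
From mathcomp Require Import all_boot all_order all_algebra.
From mathcomp Require Import all_reals.
From mathcomp Require Import algC zify ring lra.
Import Order.TTheory GRing.Theory Num.Theory.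
Local Open Scope ring_scope.
Lemma taylor_coef (f : {poly int}) (c : int) (m : nat) :
  (f \Po ('X + c%:P))`_m = (f^`N(m)).[c].
Proof.
rewrite /comp_poly addrC nderiv_taylor; last exact: mulrC.
rewrite size_map_polyC.
have -> : \sum_(i < size f) ((f^:P)^`N(i)).[c%:P] * 'X^i
   = \poly_(i < size f) (f^`N(i)).[c].
  rewrite poly_def; apply: eq_bigr => i _.
  by rewrite nderivn_map horner_map /= mul_polyC.
rewrite coef_poly; case: ltnP => // le.
by rewrite nderivn_poly0 // horner0.
Qed.
Lemma exJ (P : pred nat) (w : nat -> nat) (B : nat) :
  (exists i, P i) -> (forall i, P i -> (i < B)%N) ->
  exists J, [/\ P J, forall i, P i -> (w J <= w i)%N
              & forall i, P i -> (J < i)%N -> (w J < w i)%N].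
Proof.
move=> [i0 Pi0] bnd.
have ex : exists m, [exists i : 'I_B, P i && (w i == m)].
  by exists (w i0); apply/existsP; exists (Ordinal (bnd _ Pi0)); rewrite Pi0 eqxx.
case: (ex_minnP ex) => mu /existsP [j0 /andP [Pj0 /eqP wj0]] minmu.
have ex2 : exists j, P j && (w j == mu) by exists j0; rewrite Pj0 wj0 eqxx.
have bnd2 : forall j, P j && (w j == mu) -> (j <= B)%N.
  by move=> j /andP [/bnd /ltnW].
case: (ex_maxnP ex2 bnd2) => J /andP [PJ /eqP wJ] maxJ.
have minw : forall i, P i -> (mu <= w i)%N.
  move=> i Pi; apply: minmu; apply/existsP; exists (Ordinal (bnd _ Pi)).
  by rewrite /= Pi eqxx.
exists J; split => // [i Pi|i Pi ltJi]; rewrite wJ; first exact: minw.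
rewrite ltn_neqAle minw // andbT; apply/eqP => eq.
have := maxJ i; rewrite Pi -eq eqxx => /(_ isT); lia.
Qed.

Definition vp (p : nat) (x : int) := logn p `|x|%N.

Lemma vp_dvd p e (x : int) : prime p -> x != 0 ->
  (((p ^ e)%N%:Z %| x)%Z = (e <= vp p x)%N).
Proof. by move=> pp x0; rewrite dvdzE absz_nat pfactor_dvdn // absz_gt0. Qed.

Lemma vp_mul p (x y : int) : x != 0 -> y != 0 -> vp p (x * y) = (vp p x + vp p y)%N.
Proof. by move=> x0 y0; rewrite /vp abszM lognM // absz_gt0. Qed.

Lemma coef_bound (G : {poly int}) i : G`_i != 0 -> (i < size G)%N.
Proof. by apply: contraR; rewrite -leqNgt => /(nth_default 0) ->. Qed.

Lemma ar2 x y z : (x < y)%N -> (z < y + z - x)%N.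
Proof. lia. Qed.

Lemma NP (p k l : nat) (G H : {poly int}) :
  prime p -> coprime k l -> (0 < l)%N -> (0 < k)%N ->
  (forall m, (m < l)%N -> ((p ^ k)%N%:Z %| (G * H)`_m)%Z) ->
  ~~ (p%:Z %| (G * H)`_l)%Z ->
  G`_0 != 0 -> H`_0 != 0 -> (p%:Z %| G`_0)%Z -> (p%:Z %| H`_0)%Z ->
  (vp p G`_0 + vp p H`_0)%N = k -> False.
Proof.
move=> pp ckl l0 k0 hlow hl G0 H0 pG0 pH0 uwk.
have [JG [PJG minG strG]] := @exJ (fun i => G`_i != 0) (fun i => l * vp p G`_i + k * i)%N (size _)
   (ex_intro _ 0%N G0) (@coef_bound G).
have [JH [PJH minH strH]] := @exJ (fun i => H`_i != 0) (fun i => l * vp p H`_i + k * i)%N (size _)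
   (ex_intro _ 0%N H0) (@coef_bound H).
set u := vp p G`_0; set w := vp p H`_0.
have u1 : (1 <= u)%N by rewrite -vp_dvd // expn1.
have w1 : (1 <= w)%N by rewrite -vp_dvd // expn1.
set a := vp p G`_JG; set b := vp p H`_JH.
set J := (JG + JH)%N.
have S1 : ~~ (((p ^ (a + b).+1)%N%:Z %| (G * H)`_J)%Z).
  rewrite coefM (bigD1 (Ordinal (leq_addr JH JG : (JG < J.+1)%N))) //=.
  rewrite rpredDr /=.
    by rewrite addKn vp_dvd ?mulf_neq0 // vp_mul // -/a -/b ltnn.
  apply: rpred_sum => i /= ne.
  have [->|Gi0] := eqVneq G`_i 0; first by rewrite mul0r rpred0.
  have [->|Hi0] := eqVneq H`_(J - i) 0; first by rewrite mulr0 rpred0.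
  rewrite vp_dvd ?mulf_neq0 // vp_mul //.
  have iJ : (i <= J)%N by rewrite -ltnS.
  have ne' : (i : nat) != JG by apply: contra ne => /eqP e; apply/eqP/val_inj.
  have [ltJi|ltiJ] : (JG < i \/ i < JG)%N by lia.
  - have h1 := strG i Gi0 ltJi; have h2 := minH _ Hi0.
    rewrite -/a -/b in h1 h2.
    suff : (l * (a + b) < l * (vp p G`_i + vp p H`_(J - i)))%N
      by rewrite ltn_pmul2l.
    have ek : (k * (J - i) + k * i = k * JG + k * JH)%N by rewrite -!mulnDr subnK.
    rewrite !mulnDr; clear -h1 h2 ek; lia.
  - have hJi : (JH < J - i)%N by rewrite /J; apply: ar2.
    have h1 := minG i Gi0; have h2 := strH (J - i)%N Hi0 hJi.
    rewrite -/a -/b in h1 h2.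
    suff : (l * (a + b) < l * (vp p G`_i + vp p H`_(J - i)))%N
      by rewrite ltn_pmul2l.
    have ek : (k * (J - i) + k * i = k * JG + k * JH)%N by rewrite -!mulnDr subnK.
    rewrite !mulnDr; clear -h1 h2 ek; lia.
set c := (G * H)`_J in S1 *.
have c0 : c != 0 by apply: contraNneq S1 => ->; exact: dvdz0.
have vc : (vp p c <= a + b)%N by rewrite leqNgt -vp_dvd.
have Fst : (k * l <= l * vp p c + k * J)%N.
  case: (ltnP J l) => hJ.
    have := hlow _ hJ; rewrite vp_dvd // => hk.
    rewrite mulnC; apply: leq_trans (leq_addr _ _); by rewrite leq_pmul2l.
  apply: leq_trans (leq_addl _ _); by rewrite leq_pmul2l.
have hG0 := minG 0%N G0; have hH0 := minH 0%N H0.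
rewrite -/u -/a in hG0; rewrite -/w -/b in hH0.
have e1 : (l * vp p c <= l * (a + b))%N by rewrite leq_pmul2l.
have E1 : (l * (a + b) = l * a + l * b)%N by rewrite mulnDr.
have E2 : (l * u + l * w = k * l)%N by rewrite -mulnDr uwk mulnC.
have E3 : (k * J = k * JG + k * JH)%N by rewrite mulnDr.
have eqG : (l * a + k * JG = l * u)%N by clear -e1 E1 E2 E3 Fst hG0 hH0; lia.
have eqH : (l * b + k * JH = l * w)%N by clear -e1 E1 E2 E3 Fst hG0 hH0; lia.
have Jl : (J <= l)%N.
  have : (k * J <= k * l)%N by clear -e1 E1 E2 E3 Fst hG0 hH0; lia.
  by rewrite leq_pmul2l.
have ldiv : forall (x y z : nat), (l * y + k * x = l * z)%N -> (x <= l)%N ->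
   x = 0%N \/ x = l.
  move=> x y z e xl.
  have : (l %| x)%N.
    rewrite -(Gauss_dvdr _ (_ : coprime l k)); last by rewrite coprime_sym.
    apply/dvdnP; exists (z - y)%N; rewrite [((z - y) * l)%N]mulnC mulnBr; clear -e; lia.
  case/dvdnP => q eq; rewrite eq in xl *; case: q {eq} xl => [|[|q]] xl.
  - by left.
  - by right; rewrite mul1n.
  - move: xl; rewrite !mulSn; clear -l0; lia.
have JGl : (JG <= l)%N by apply: leq_trans (leq_addr JH JG) Jl.
have JHl : (JH <= l)%N by apply: leq_trans (leq_addl JG JH) Jl.
have JG0 : JG = 0%N.
  case: (ldiv _ _ _ eqG JGl) => // eJ.
  rewrite eJ in eqG.
  have h : (a + k = u)%N by apply/eqP; rewrite -(eqn_pmul2l l0) mulnDr [(l * k)%N]mulnC eqG.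
  clear -h uwk w1; lia.
have JH0 : JH = 0%N.
  case: (ldiv _ _ _ eqH JHl) => // eJ.
  rewrite eJ in eqH.
  have h : (b + k = w)%N by apply/eqP; rewrite -(eqn_pmul2l l0) mulnDr [(l * k)%N]mulnC eqH.
  clear -h uwk u1; lia.
move/negP: hl; apply; rewrite coefM; apply: rpred_sum => i _.
have [->|Gi0] := eqVneq G`_i 0; first by rewrite mul0r rpred0.
have [->|Hi0] := eqVneq H`_(l - i) 0; first by rewrite mulr0 rpred0.
rewrite -(expn1 p) vp_dvd ?mulf_neq0 // vp_mul //.
have il : (i <= l)%N by rewrite -ltnS.
suff : (0 < l * (vp p G`_i + vp p H`_(l - i)))%N.
  by rewrite muln_gt0 => /andP [].
rewrite JG0 in strG minG; rewrite JH0 in strH minH.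
have ek : (k * (l - i) + k * i = k * l)%N by rewrite -!mulnDr subnK.
rewrite mulnDr.
case: (posnP i) => [i0|ip].
- have lpos : (0 < l - i)%N by rewrite i0 subn0.
  have h1 := strH (l - i)%N Hi0 lpos.
  move: Gi0 h1 ek; rewrite i0 => Gi0; rewrite !subn0 -/u -/w muln0 => h1 ek.
  clear -h1 E2; lia.
- have h1 := strG i Gi0 ip; have h2 := minH _ Hi0.
  rewrite -/u -/w !muln0 !addn0 in h1 h2.
  clear -h1 h2 ek E2; lia.
Qed.
Lemma mono (F : numFieldType) (a : nat -> F) (m : nat) (s t : F) :
  (forall i, 0 <= a i) -> 0 < s -> s <= t ->
  \sum_(i < m) a i * s ^+ i < a m * s ^+ m ->
  \sum_(i < m) a i * t ^+ i < a m * t ^+ m.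
Proof.
move=> a0 s0 st h.
have t0 : 0 < t by apply: lt_le_trans st.
have sm0 : 0 < s ^+ m by rewrite exprn_gt0.
have tm0 : 0 < t ^+ m by rewrite exprn_gt0.
rewrite -(ltr_pM2l sm0).
apply: (@le_lt_trans _ _ (t ^+ m * \sum_(i < m) a i * s ^+ i)).
  rewrite !mulr_sumr; apply: ler_sum => i _.
  have im : (i <= m)%N by apply: ltnW.
  rewrite (mulrCA (s ^+ m)) (mulrCA (t ^+ m)); apply: ler_wpM2l => //.
  have -> : s ^+ m = s ^+ (m - i) * s ^+ i by rewrite -exprD subnK.
  have -> : t ^+ m = t ^+ (m - i) * t ^+ i by rewrite -exprD subnK.
  rewrite -!mulrA [_ * t ^+ i]mulrC; apply: ler_wpM2r.
    by rewrite mulr_ge0 // exprn_ge0 // ltW.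
  by apply: lerXn2r => //; rewrite nnegrE ltW.
rewrite mulrCA; apply: (@lt_le_trans _ _ (t ^+ m * (a m * s ^+ m))).
  by rewrite ltr_pM2l.
rewrite le_eqVlt; apply/orP; left; apply/eqP; ring.
Qed.
Lemma castI (F : numFieldType) (f : {poly int}) (N : nat) :
  (\sum_(i < (size f).-1) `|f`_i| * (N%:Z) ^+ i < `|f`_(size f).-1| * (N%:Z) ^+ (size f).-1)
  -> \sum_(i < (size f).-1) `|f`_i|%:~R * (N%:R : F) ^+ i
      < `|f`_(size f).-1|%:~R * (N%:R : F) ^+ (size f).-1.
Proof.
rewrite -(ltr_int F) rmorph_sum rmorphM rmorphXn /=.
congr (_ < _); first apply: eq_bigr => i _.
  all: by rewrite rmorphM rmorphXn.
Qed.

Lemma rootbound (f : {poly int}) (N : nat) (r : algC) :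
  (1 < size f)%N -> (0 < N)%N ->
  (\sum_(i < (size f).-1) `|f`_i| * (N%:Z) ^+ i < `|f`_(size f).-1| * (N%:Z) ^+ (size f).-1) ->
  root (map_poly intr f) r -> `|r| < N%:R.
Proof.
move=> sf N0 hI; rewrite /root horner_coef (size_map_inj_poly (@intr_inj algC)); last by [].
move=> e0; rewrite real_ltNge ?normr_real ?realn //; apply/negP => Nr.
have hm := @castI algC f N hI.
have := @mono algC (fun i => `|f`_i|%:~R) _ _ `|r| (fun i => ler0z _ _) _ Nr hm.
rewrite ltr0n => /(_ N0) hlt.
move: e0; rewrite (polySpred (_ : f != 0)); last by rewrite -size_poly_eq0; case: (size f) sf.
rewrite big_ord_recr /= addr_eq0 => /eqP e.
suff H : `|f`_(size f).-1|%:~R * `|r| ^+ (size f).-1 <= \sum_(i < (size f).-1) `|f`_i|%:~R * `|r| ^+ i.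
  by move: (lt_le_trans hlt H); rewrite ltxx.
have -> : `|f`_(size f).-1|%:~R * `|r| ^+ (size f).-1 = `|(map_poly intr f)`_(size f).-1 * r ^+ (size f).-1|.
  by rewrite normrM normrX coef_map /= intr_norm.
rewrite -[X in `|X|]opprK -e normrN; apply: le_trans (ler_norm_sum _ _ _) _.
apply: ler_sum => i _.
by rewrite normrM normrX coef_map /= intr_norm.
Qed.

Lemma prodgt (F : numFieldType) (s : seq algC) (G : algC -> F) (d : F) :
  s != [::] -> 1 <= d -> (forall z, z \in s -> d < G z) ->
  d < \prod_(z <- s) G z.
Proof.
move=> + d1; elim: s => [|z s IH] // _ hs.
rewrite big_cons.
have Gz : d < G z by apply: hs; rewrite mem_head.
have P1 : 1 <= \prod_(z <- s) G z.
  case: s IH hs => [|z' s'] IH hs; first by rewrite big_nil.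
  apply: ltW; apply: (le_lt_trans d1); apply: IH => // y ys.
  by apply: hs; rewrite in_cons ys orbT.
apply: (lt_le_trans Gz); rewrite ler_peMr //.
by apply: ltW; apply: (lt_trans _ Gz); apply: (lt_le_trans _ d1); exact: ltr01.
Qed.

Lemma gbound (f g h : {poly int}) (N d : nat) :
  f = g * h -> (1 < size g)%N -> (1 < size f)%N -> (0 < N)%N -> (0 < d)%N ->
  (\sum_(i < (size f).-1) `|f`_i| * (N%:Z) ^+ i < `|f`_(size f).-1| * (N%:Z) ^+ (size f).-1) ->
  (d < `|g.[(N + d)%N%:Z]|)%N.
Proof.
move=> fgh sg sf N0 d0 hI.
set gC := map_poly (intr : int -> algC) g.
have [rs Hg] := closed_field_poly_normal gC.
have sgC : size gC = size g by rewrite (size_map_inj_poly (@intr_inj algC)).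
have rsn : rs != [::].
  apply/negP => /eqP rs0; move: Hg; rewrite rs0 big_nil => Hg.
  by move: sg; rewrite -sgC Hg -mul_polyC mulr1 size_polyC; case: (_ != 0).
have roots : forall z, z \in rs -> `|z| < N%:R.
  move=> z zin; apply: (@rootbound f N z sf N0 hI).
  rewrite fgh rmorphM /= rootM; apply/orP; left.
  rewrite -/gC /root Hg hornerZ horner_prod mulf_eq0 prodf_seq_eq0; apply/orP; right.
  by apply/hasP; exists z => //; rewrite hornerXsubC subrr eqxx.
have lc1 : 1 <= `|lead_coef gC|.
  rewrite lead_coef_map_inj; last by [].
  2: exact: (@intr_inj algC).
  rewrite -intr_norm ler1z.
  rewrite -abszE lez_nat absz_gt0 lead_coef_eq0 -size_poly_eq0.
  by case: (size g) sg.
have key : (d%:R : algC) < `|gC.[(N + d)%:R]|.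
  rewrite {1}Hg hornerZ normrM horner_prod normr_prod.
  apply: lt_le_trans (ler_peMl _ lc1); last first.
    by apply: prodr_ge0 => z _; exact: normr_ge0.
  apply: prodgt => //; first by rewrite ler1n.
  move=> z zin; rewrite hornerXsubC.
  apply: lt_le_trans (lerB_dist _ _).
  rewrite normr_nat ltrBrDr natrD [X in _ < X]addrC ltrD2l.
  exact: roots.
move: key; rewrite -[(N + d)%:R]/((N + d)%N%:Z)%:~R horner_map -intr_norm.
by rewrite -abszE -[d%:R]/(d%:Z)%:~R ltr_int ltz_nat.
Qed.
Lemma unit_abs1 (x : int) : `|x|%N = 1%N -> x \is a GRing.unit.
Proof.
case: x => [n|n] /= e.
  by rewrite e unitr1.
by move: e => [->]; have -> : Negz 0 = -1 by []; rewrite unitrN1.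
Qed.

Lemma ar3 u w k : (u + w)%N = k -> (1 <= u)%N -> (1 <= w)%N -> (k <= 1)%N -> False.
Proof. lia. Qed.

Lemma castE (F : numFieldType) (f : {poly int}) (N : nat) :
  (\sum_(i < (size f).-1) `|f`_i| * (N%:Z) ^+ i < `|f`_(size f).-1| * (N%:Z) ^+ (size f).-1)
  = (\sum_(i < (size f).-1) `|f`_i|%:~R * (N%:R : F) ^+ i
      < `|f`_(size f).-1|%:~R * (N%:R : F) ^+ (size f).-1).
Proof.
rewrite -(ltr_int F) rmorph_sum rmorphM rmorphXn /=.
congr (_ < _); first apply: eq_bigr => i _.
  all: by rewrite rmorphM rmorphXn.
Qed.

Lemma const_unit (f g h : {poly int}) : primitive_intpoly f -> f != 0 ->
  f = g * h -> (size g <= 1)%N -> g \is a GRing.unit.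
Proof.
move=> prim f0 fgh sg.
have gC := size1_polyC sg.
have g0 : g`_0 != 0.
  apply: contra f0 => /eqP g00; rewrite fgh gC g00 mul0r //.
rewrite poly_unitE; apply/andP; split.
  by rewrite eqn_leq sg /= lt0n size_poly_eq0; apply: contra g0 => /eqP ->; rewrite coef0.
apply: unit_abs1; apply/eqP; rewrite -dvdn1 -prim.
apply/dvdn_biggcdP => i _; move: (nat_of_ord i) => j.
by rewrite fgh {2}gC coefCM abszM dvdn_mulr.
Qed.

Theorem theorem1 (R : realType) (f : {poly int}) (alpha : R)
    (n d k l p : nat) :
  primitive_intpoly f ->
  0 < alpha ->
  (`|f`_(size f).-1|%:~R * alpha ^+ (size f).-1 >
     \sum_(i < (size f).-1) `|f`_i|%:~R * alpha ^+ i) ->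
  (0 < n)%N -> (0 < d)%N -> (0 < k)%N -> (0 < l)%N ->
  (l <= (size f).-1)%N ->
  prime p -> ~~ (p %| d)%N ->
  alpha + d%:R <= n%:R ->
  (f.[n%:Z] = (p ^ k * d)%N%:Z \/ f.[n%:Z] = - (p ^ k * d)%N%:Z) ->
  coprime k l ->
  (forall i : nat, (i < l)%N -> ((p ^ k)%N%:Z %| (f^`N(i)).[n%:Z])%Z) ->
  ((1 < k)%N -> ~~ ((p%:Z %| (f^`N(l)).[n%:Z])%Z)) ->
  irreducible_in_Zz f.
Proof.
move=> prim a0 hA n0 d0 k0 l0 lm pp pd hn fn ckl hlow hl.
have sf : (1 < size f)%N by case: (size f) lm l0 => [|[|s]] //=; lia.
have f0 : f != 0 by rewrite -size_poly_eq0; case: (size f) sf.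
have dn : (d < n)%N.
  rewrite -(ltr_nat R); apply: lt_le_trans hn.
  by rewrite ltrDr.
set N := (n - d)%N.
have N0 : (0 < N)%N by rewrite subn_gt0.
have nN : n = (N + d)%N by rewrite subnK // ltnW.
have hI : \sum_(i < (size f).-1) `|f`_i| * (N%:Z) ^+ i
          < `|f`_(size f).-1| * (N%:Z) ^+ (size f).-1.
  rewrite (castE R); apply: (@mono R (fun i => `|f`_i|%:~R) _ alpha) => //.
  try (by move=> i; rewrite ler0z).
  have -> : (N%:R : R) = n%:R - d%:R by rewrite /N natrB // ltnW.
  by rewrite lerBrDr.
split => //; split.
  by rewrite poly_unitE negb_and; apply/orP; left; rewrite neq_ltn sf orbT.
move=> g h fgh.
case: (leqP (size g) 1) => sg; first by left; exact: const_unit fgh sg.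
case: (leqP (size h) 1) => sh.
  by right; apply: (@const_unit f h g prim f0) => //; rewrite mulrC.
exfalso.
have Ag := @gbound f g h N d fgh sg sf N0 d0 hI.
have fhg : f = h * g by rewrite mulrC.
have Ah := @gbound f h g N d fhg sh sf N0 d0 hI.
rewrite -nN in Ag Ah.
set A := `|g.[n%:Z]|%N in Ag; set B := `|h.[n%:Z]|%N in Ah.
have AB : (A * B = p ^ k * d)%N.
  rewrite /A /B -abszM -hornerM -fgh.
  by case: fn => ->; rewrite ?abszN absz_nat.
have pA : forall X Y, (X * Y = p ^ k * d)%N -> (d < X)%N -> (p %| X)%N.
  move=> X Y e dX; apply: contraLR dX; rewrite -leqNgt => npX.
  apply: dvdn_leq => //.
  have cX : coprime X (p ^ k) by rewrite coprimeXr // coprime_sym prime_coprime.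
  by rewrite -(Gauss_dvdr _ cX) -e dvdn_mulr.
have pA' := pA _ _ AB Ag.
have pB' := pA B A (ltac:(by rewrite mulnC)) Ah.
have Ap : (0 < A)%N by apply: leq_ltn_trans Ag.
have Bp : (0 < B)%N by apply: leq_ltn_trans Ah.
have vsum : (vp p g.[n%:Z] + vp p h.[n%:Z])%N = k.
  have pk0 : (0 < p ^ k)%N by rewrite expn_gt0 prime_gt0.
  have cpd : coprime p d by rewrite prime_coprime.
  rewrite /vp -/A -/B -(lognM p Ap Bp) AB (lognM p pk0 d0) (pfactorK k pp).
  by rewrite (logn_coprime cpd) addn0.
have u1 : (1 <= vp p g.[n%:Z])%N by rewrite /vp -/A -(@pfactor_dvdn p 1 A pp Ap) expn1.
have w1 : (1 <= vp p h.[n%:Z])%N by rewrite /vp -/B -(@pfactor_dvdn p 1 B pp Bp) expn1.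
case: (leqP k 1) => k1; first by exact: (@ar3 _ _ k vsum u1 w1 k1).
set q := ('X + (n%:Z)%:P : {poly int}).
have c0 : forall P : {poly int}, (P \Po q)`_0 = P.[n%:Z].
  by move=> P; rewrite -horner_coef0 horner_comp /q hornerD hornerX hornerC add0r.
apply: (@NP p k l (g \Po q) (h \Po q) pp ckl l0 k0).
- by move=> m ml; rewrite -comp_polyM -fgh taylor_coef; apply: hlow.
- by rewrite -comp_polyM -fgh taylor_coef; apply: hl.
- by rewrite c0 -absz_gt0.
- by rewrite c0 -absz_gt0.
- by rewrite c0 dvdzE absz_nat.
- by rewrite c0 dvdzE absz_nat.
- by rewrite !c0.
Qed.
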